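(* Let $\mathcal P$ be a Poisson $n$-Lie algebra. Then $\operatorname{Nil}(\mathcal P)$ is contained in every maximal hypo-nilpotent ideal of $\mathcal P$.
   Context: A Poisson $n$-Lie algebra is a commutative associative algebra $(\mathcal P,\cdot)$ with an $n$-linear skew-symmetric bracket satisfying the fundamental identity $[x_1,\dots,x_{n-1},[y_1,\dots,y_n]]=\sum_{i=1}^n[y_1,\dots,[x_1,\dots,x_{n-1},y_i],\dots,y_n]$ and the Leibniz rule $[y\cdot z,x_2,\dots,x_n]=y\cdot[z,x_2,\dots,x_n]+z\cdot[y,x_2,\dots,x_n]$. Products/brackets of subspaces are linear spans. For an ideal $\mathcal I$ (subspace with $\mathcal P\cdot\mathcal I\subseteq\mathcal I$, $[\mathcal I,\mathcal P,\dots,\mathcal P]\subseteq\mathcal I$): $\mathcal I^1=\mathcal I$, $\mathcal I^{k+1}=[\mathcal I^k,\mathcal I,\mathcal P,\dots,\mathcal P]+\mathcal I^k\cdot\mathcal I$, and $\mathcal I^{[1]}=\mathcal I$, $\mathcal I^{[k+1]}=[\mathcal I^{[k]},\mathcal I,\dots,\mathcal I]+\mathcal I^{[k]}\cdot\mathcal I$. $\mathcal I$ is a nilpotent ideal if $\mathcal I^s=0$ for some $s$, and nilpotent as a subalgebra if $\mathcal I^{[s]}=0$ for some $s$. $\operatorname{Nil}(\mathcal P)$ is the maximal nilpotent ideal of $\mathcal P$. A hypo-nilpotent ideal is an ideal that is nilpotent as a subalgebra but not nilpotent as an ideal; a maximal hypo-nilpotent ideal is one not properly contained in any other hypo-nilpotent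 ideal. *)

(* Defs.v *)
From HB Require Import structures.
From mathcomp Require Import all_boot all_order all_algebra.
From mathcomp Require Import fingroup perm.
Set Implicit Arguments. Unset Strict Implicit. Unset Printing Implicit Defensive.
Import GRing.Theory.
Local Open Scope ring_scope.

(* Subspaces (possibly infinite-dimensional) are represented as predicates
   V -> Prop on an F-vector space V. Arguments of the n-ary bracket are
   finite functions {ffun 'I_n -> V}; slot k (0-based) is the k-th argument. *)

Section PoissonNLie.
Variables (F : fieldType) (V : lmodType F) (n : nat).
Variables (mul : V -> V -> V) (br : {ffun 'I_n -> V} -> V).

Definition updn (f : {ffun 'I_n -> V}) (k : nat) (v : V) : {ffun 'I_n -> V} :=
  [ffun i : 'I_n => if val i == k then v else f i].

Definition poisson_nlie : Prop :=
  (forall (a : F) (x y z : V), mul (a *: x + y) z = a *: mul x z + mul y z) /\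
      (forall x y : V, mul x y = mul y x) /\
      (forall x y z : V, mul x (mul y z) = mul (mul x y) z) /\
      (forall (f : {ffun 'I_n -> V}) (i : 'I_n) (a : F) (u v : V),
         br (updn f i (a *: u + v)) = a *: br (updn f i u) + br (updn f i v)) /\
      (forall (f : {ffun 'I_n -> V}) (i j : 'I_n), i != j ->
         br [ffun k => f (tperm i j k)] = - br f) /\
      (forall x y : {ffun 'I_n -> V},
         br (updn x n.-1 (br y)) =
         \sum_(i < n) br (updn y i (br (updn x n.-1 (y i))))) /\
      (forall (x : {ffun 'I_n -> V}) (y z : V),
         br (updn x 0 (mul y z)) =
         mul y (br (updn x 0 z)) + mul z (br (updn x 0 y))).

Definition subS (S T : V -> Prop) : Prop := forall v, S v -> T v.
Definition fullset : V -> Prop := fun _ => True.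
Definition is_zero (S : V -> Prop) : Prop := forall v, S v <-> v = 0.

Definition subspace (S : V -> Prop) : Prop :=
  S 0 /\ forall (a : F) (u v : V), S u -> S v -> S (a *: u + v).

Definition span (G : V -> Prop) : V -> Prop :=
  fun v => forall W, subspace W -> subS G W -> W v.

Definition prodS (A B : V -> Prop) : V -> Prop :=
  span (fun v => exists a b, [/\ A a, B b & v = mul a b]).

Definition brS (S : nat -> V -> Prop) : V -> Prop :=
  span (fun v => exists f : {ffun 'I_n -> V},
                   (forall i : 'I_n, S (val i) (f i)) /\ v = br f).

Definition sumS (A B : V -> Prop) : V -> Prop :=
  fun v => exists a b, [/\ A a, B b & v = a + b].

Definition ideal (I : V -> Prop) : Prop :=
  [/\ subspace I,
      subS (prodS fullset I) I &
      subS (brS (fun k => if k == 0%N then I else fullset)) I].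

(* powI I k = I^(k+1) :  I^1 = I,
   I^{k+1} = [I^k, I, P, ..., P] + I^k . I *)
Fixpoint powI (I : V -> Prop) (k : nat) : V -> Prop :=
  match k with
  | 0 => I
  | k'.+1 =>
      sumS (brS (fun j => if j == 0%N then powI I k'
                          else if j == 1%N then I else fullset))
           (prodS (powI I k') I)
  end.

(* powD I k = I^[k+1] :  I^[1] = I,
   I^[k+1] = [I^[k], I, ..., I] + I^[k] . I *)
Fixpoint powD (I : V -> Prop) (k : nat) : V -> Prop :=
  match k with
  | 0 => I
  | k'.+1 =>
      sumS (brS (fun j => if j == 0%N then powD I k' else I))
           (prodS (powD I k') I)
  end.

Definition nilpotent_ideal (I : V -> Prop) : Prop :=
  ideal I /\ exists s, is_zero (powI I s).

Definition nilpotent_subalgebra (I : V -> Prop) : Prop :=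
  exists s, is_zero (powD I s).

Definition is_Nil (N : V -> Prop) : Prop :=
  nilpotent_ideal N /\ forall K, nilpotent_ideal K -> subS K N.

Definition hypo_nilpotent (I : V -> Prop) : Prop :=
  [/\ ideal I, nilpotent_subalgebra I & ~ nilpotent_ideal I].

Definition max_hypo_nilpotent (I : V -> Prop) : Prop :=
  hypo_nilpotent I /\
  forall J, hypo_nilpotent J -> subS I J -> subS J I.

End PoissonNLie.

(* Main.v *)
Require Import Defs.
From HB Require Import structures.
From mathcomp Require Import all_boot all_order all_algebra fingroup perm.
Set Implicit Arguments. Unset Strict Implicit. Unset Printing Implicit Defensive.
Import GRing.Theory.
Local Open Scope ring_scope.

Section Basics.
Variables (F : fieldType) (V : lmodType F).

Lemma subD (S : V -> Prop) u v : subspace S -> S u -> S v -> S (u + v).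
Proof. by move=> [_ H] Su Sv; have := H 1 u v Su Sv; rewrite scale1r. Qed.

Lemma subZ (S : V -> Prop) a u : subspace S -> S u -> S (a *: u).
Proof. by move=> [S0 H] Su; have := H a u 0 Su S0; rewrite addr0. Qed.

Lemma subN (S : V -> Prop) u : subspace S -> S u -> S (- u).
Proof. by move=> sS Su; rewrite -scaleN1r; apply: subZ. Qed.

Lemma sub0 (S : V -> Prop) : subspace S -> S 0.
Proof. by case. Qed.

Lemma span_sub (G W : V -> Prop) : subspace W -> subS G W -> subS (Defs.span G) W.
Proof. by move=> sW sG v Hv; apply: Hv. Qed.

Lemma span_gen (G : V -> Prop) : subS G (Defs.span G).
Proof. by move=> v Gv W _ sG; apply: sG. Qed.

Lemma span_subspace (G : V -> Prop) : subspace (Defs.span G).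
Proof.
split; first by move=> W [] .
move=> a u v Hu Hv W sW sG; case: (sW) => _ H; apply: H; [exact: Hu | exact: Hv].
Qed.

Lemma sumS_subspace (A B : V -> Prop) : subspace A -> subspace B -> subspace (sumS A B).
Proof.
move=> sA sB; split; first by exists 0, 0; rewrite addr0; split => //; apply: sub0.
move=> a u v [a1 [b1 [A1 B1 ->]]] [a2 [b2 [A2 B2 ->]]].
exists (a *: a1 + a2), (a *: b1 + b2); split.
- by case: sA => _ H; apply: H.
- by case: sB => _ H; apply: H.
- by rewrite scalerDr addrACA.
Qed.

Lemma sumS_sub (A B W : V -> Prop) : subspace W -> subS A W -> subS B W -> subS (sumS A B) W.
Proof. by move=> sW hA hB v [a [b [Aa Bb ->]]]; apply: subD => //; [apply: hA | apply: hB]. Qed.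

Lemma sumS_l (A B : V -> Prop) : subspace B -> subS A (sumS A B).
Proof. by move=> sB v Av; exists v, 0; rewrite addr0; split => //; apply: sub0. Qed.

Lemma sumS_r (A B : V -> Prop) : subspace A -> subS B (sumS A B).
Proof. by move=> sA v Bv; exists 0, v; rewrite add0r; split => //; apply: sub0. Qed.

Lemma sumS_mono (A B A' B' : V -> Prop) : subS A A' -> subS B B' -> subS (sumS A B) (sumS A' B').
Proof. by move=> h1 h2 v [a [b [Aa Bb ->]]]; exists a, b; split; [apply: h1 | apply: h2 |]. Qed.

Lemma subS_trans (A B C : V -> Prop) : subS A B -> subS B C -> subS A C.
Proof. by move=> h1 h2 v /h1 /h2. Qed.

End Basics.

Section Poisson.
Variables (F : fieldType) (V : lmodType F) (n' : nat).
Local Notation n := n'.+2.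
Variables (mul : V -> V -> V) (br : {ffun 'I_n -> V} -> V).
Hypothesis HP : poisson_nlie mul br.

Lemma mulC x y : mul x y = mul y x.
Proof. by have := HP; rewrite /poisson_nlie; move=> [_ [H _]]; apply: H. Qed.
Lemma mulA x y z : mul x (mul y z) = mul (mul x y) z.
Proof. by have := HP; rewrite /poisson_nlie; move=> [_ [_ [H _]]]; apply: H. Qed.
Lemma mulL a x y z : mul (a *: x + y) z = a *: mul x z + mul y z.
Proof. by have := HP; rewrite /poisson_nlie; move=> [H _]; apply: H. Qed.
Lemma brL (f : {ffun 'I_n -> V}) (i : 'I_n) a u v :
  br (updn f i (a *: u + v)) = a *: br (updn f i u) + br (updn f i v).
Proof. by have := HP; rewrite /poisson_nlie; move=> [_ [_ [_ [H _]]]]; apply: H. Qed.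
Lemma skew (f : {ffun 'I_n -> V}) (i j : 'I_n) : i != j ->
  br [ffun k => f (tperm i j k)] = - br f.
Proof. by have := HP; rewrite /poisson_nlie; move=> [_ [_ [_ [_ [H _]]]]]; apply: H. Qed.
Lemma FIid (x y : {ffun 'I_n -> V}) :
  br (updn x n.-1 (br y)) = \sum_(i < n) br (updn y i (br (updn x n.-1 (y i)))).
Proof. by have := HP; rewrite /poisson_nlie; move=> [_ [_ [_ [_ [_ [H _]]]]]]; apply: H. Qed.
Lemma leib (x : {ffun 'I_n -> V}) y z :
  br (updn x 0 (mul y z)) = mul y (br (updn x 0 z)) + mul z (br (updn x 0 y)).
Proof. by have := HP; rewrite /poisson_nlie; move=> [_ [_ [_ [_ [_ [_ H]]]]]]; apply: H. Qed.

Lemma mulDl x y z : mul (x + y) z = mul x z + mul y z.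
Proof. by have := mulL 1 x y z; rewrite !scale1r. Qed.
Lemma mulDr x y z : mul z (x + y) = mul z x + mul z y.
Proof. by rewrite mulC mulDl !(mulC z). Qed.
Lemma mul0l z : mul 0 z = 0.
Proof. have := mulDl 0 0 z; rewrite addr0 => H.
have : mul 0 z + mul 0 z - mul 0 z = mul 0 z - mul 0 z by rewrite -H.
by rewrite addrK subrr. Qed.

Lemma brD (f : {ffun 'I_n -> V}) (i : 'I_n) u v :
  br (updn f i (u + v)) = br (updn f i u) + br (updn f i v).
Proof. by have := brL f i 1 u v; rewrite !scale1r. Qed.
Lemma br0 (f : {ffun 'I_n -> V}) (i : 'I_n) : br (updn f i 0) = 0.
Proof. have := brD f i 0 0; rewrite addr0 => H.
have : br (updn f i 0) + br (updn f i 0) - br (updn f i 0) = br (updn f i 0) - br (updn f i 0) by rewrite -H.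
by rewrite addrK subrr. Qed.

Lemma updnE (f : {ffun 'I_n -> V}) k v i : updn f k v i = if val i == k then v else f i.
Proof. by rewrite ffunE. Qed.

Lemma updn_id (f : {ffun 'I_n -> V}) (i : 'I_n) : updn f i (f i) = f.
Proof. by apply/ffunP => k; rewrite updnE val_eqE; case: eqP => // ->. Qed.

Lemma updn_same (f : {ffun 'I_n -> V}) k u v : updn (updn f k u) k v = updn f k v.
Proof. by apply/ffunP => i; rewrite !updnE; case: eqP. Qed.

Lemma tperm_updn (f : {ffun 'I_n -> V}) (i j : 'I_n) :
  [ffun k => f (tperm i j k)] = updn (updn f i (f j)) j (f i).
Proof.
apply/ffunP => k; rewrite ffunE !updnE !val_eqE.
case: tpermP => [->|->|/eqP nki /eqP nkj]; rewrite ?eqxx //.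
- by case: eqP => // ->.
- by rewrite (negbTE nkj) (negbTE nki).
Qed.

Lemma skew' (f : {ffun 'I_n -> V}) (i j : 'I_n) : i != j ->
  br (updn (updn f i (f j)) j (f i)) = - br f.
Proof. by move=> nij; rewrite -tperm_updn skew. Qed.

Lemma slot_span (W G : V -> Prop) (f : {ffun 'I_n -> V}) (i : 'I_n) v :
  subspace W -> (forall u, G u -> W (br (updn f i u))) ->
  Defs.span G v -> W (br (updn f i v)).
Proof.
move=> sW hG Hv; apply: (Hv (fun u => W (br (updn f i u)))) => //.
split; first by rewrite br0; apply: sub0.
by move=> a u w Hu Hw; rewrite brL; case: sW => _ H; apply: H.
Qed.

Lemma mul_span (W G : V -> Prop) z v :
  subspace W -> (forall u, G u -> W (mul u z)) ->
  Defs.span G v -> W (mul v z).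
Proof.
move=> sW hG Hv; apply: (Hv (fun u => W (mul u z))) => //.
split; first by rewrite mul0l; apply: sub0.
by move=> a u w Hu Hw; rewrite mulL; case: sW => _ H; apply: H.
Qed.

Lemma brS_ind (S : nat -> V -> Prop) (W : V -> Prop) : subspace W ->
  (forall f : {ffun 'I_n -> V}, (forall i : 'I_n, S (val i) (f i)) -> W (br f)) ->
  subS (brS br S) W.
Proof. by move=> sW H; apply: span_sub => // v [f [hf ->]]; apply: H. Qed.

Lemma brS_gen (S : nat -> V -> Prop) (f : {ffun 'I_n -> V}) :
  (forall i : 'I_n, S (val i) (f i)) -> brS br S (br f).
Proof. by move=> hf; apply: span_gen; exists f. Qed.

Lemma brS_mono (S S' : nat -> V -> Prop) : (forall k v, S k v -> S' k v) ->
  subS (brS br S) (brS br S').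
Proof.
move=> h; apply: brS_ind; first exact: span_subspace.
by move=> f hf; apply: brS_gen => i; apply: h.
Qed.

Lemma prodS_ind (A B W : V -> Prop) : subspace W ->
  (forall a b, A a -> B b -> W (mul a b)) -> subS (prodS mul A B) W.
Proof. by move=> sW H; apply: span_sub => // v [a [b [Aa Bb ->]]]; apply: H. Qed.

Lemma prodS_gen (A B : V -> Prop) a b : A a -> B b -> prodS mul A B (mul a b).
Proof. by move=> Aa Bb; apply: span_gen; exists a, b. Qed.

Lemma prodS_mono (A B A' B' : V -> Prop) : subS A A' -> subS B B' ->
  subS (prodS mul A B) (prodS mul A' B').
Proof.
move=> h1 h2; apply: prodS_ind; first exact: span_subspace.
by move=> a b Aa Bb; apply: prodS_gen; [apply: h1 | apply: h2].
Qed.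

Definition o1 : 'I_n := @Ordinal n 1 isT.
Definition om : 'I_n := @ord_max n'.+1.
Definition o0 : 'I_n := @ord0 n'.+1.

Lemma ideal_sub I : ideal mul br I -> subspace I.
Proof. by case. Qed.

Lemma ideal_mul I x y : ideal mul br I -> I y -> I (mul x y).
Proof. by case=> _ H _ Iy; apply: H; apply: prodS_gen. Qed.

Lemma ideal_mulr I x y : ideal mul br I -> I x -> I (mul x y).
Proof. by move=> hI Ix; rewrite mulC; apply: ideal_mul. Qed.

Lemma ideal_br I (f : {ffun 'I_n -> V}) (i : 'I_n) : ideal mul br I -> I (f i) -> I (br f).
Proof.
case=> sI _ hb Ifi.
have gen : forall g : {ffun 'I_n -> V}, I (g ord0) -> I (br g).
  move=> g Ig; apply: hb; apply: brS_gen => k.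
  case: ifP => // /eqP k0; suff -> : k = ord0 by [].
  by apply: val_inj.
case: (eqVneq i ord0) => [ei | ni0]; first by apply: gen; rewrite -ei.
rewrite -[br f]opprK; apply: subN => //.
rewrite -(skew' f ni0); apply: gen.
by rewrite updnE eqxx.
Qed.

Lemma powI_ideal N j : ideal mul br N -> ideal mul br (powI mul br N j).
Proof.
move=> hN; elim: j => [|j hA] //=.
set A := powI mul br N j in hA *.
set B := sumS _ _.
have sA := ideal_sub hA; have sN := ideal_sub hN.
have sB : subspace B by apply: sumS_subspace; apply: span_subspace.
have genB1 : forall g : {ffun 'I_n -> V}, A (g ord0) -> N (g o1) -> B (br g).
  move=> g h0 h1; apply: sumS_l; first exact: span_subspace.
  apply: brS_gen => k; case: ifP => [/eqP k0|_].
    by rewrite (_ : k = ord0) //; apply: val_inj.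
  by case: ifP => // /eqP k1; rewrite (_ : k = o1) //; apply: val_inj.
have genB2 : forall a b, A a -> N b -> B (mul a b).
  by move=> a b Aa Nb; apply: sumS_r; [exact: span_subspace | apply: prodS_gen].
split => //.
- apply: prodS_ind => // p v _ [u [w [Hu Hw ->]]].
  rewrite mulDr; apply: subD => //; rewrite mulC.
  + apply: (mul_span sB _ Hu) => _ [g [hg ->]].
    rewrite mulC.
    have e : updn g 0 (g ord0) = g := updn_id g ord0.
    have := leib g p (g ord0); rewrite e => H.
    rewrite (_ : mul p (br g) = br (updn g 0 (mul p (g ord0))) - mul (g ord0) (br (updn g 0 p))); last first.
      by rewrite H addrK.
    apply: subD => //; last apply: subN => //.
    * apply: genB1; rewrite updnE /= ?eqxx //; first by apply: ideal_mul => //; apply: (hg ord0).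
      by apply: (hg o1).
    * apply: genB2; first by apply: (hg ord0).
      apply: (@ideal_br N _ o1) => //; rewrite updnE /= ?eqxx; apply: (hg o1).
  + apply: (mul_span sB _ Hw) => _ [a [b [Aa Nb ->]]].
    by rewrite mulC mulA; apply: genB2 => //; apply: ideal_mul.
- apply: brS_ind => // f hf.
  have h0 := hf ord0; rewrite /= in h0.
  have e : updn f 0 (f ord0) = f := updn_id f ord0.
  case: h0 => [u [w [Hu Hw e0]]].
  rewrite -e e0 (brD f ord0); apply: subD => //.
  + apply: (slot_span sB _ Hu) => _ [g [hg ->]].
    set x := updn f 0 (f om).
    have E : br (updn f 0 (br g)) = - br (updn x n.-1 (br g)).
      have := @skew' (updn f o0 (br g)) o0 om isT.
      rewrite updn_same !updnE /= => H; by rewrite /x H opprK.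
    rewrite E; apply: subN => //; rewrite FIid.
    apply: (big_ind (fun v => B v)) => //; first exact: sub0.
      by move=> ? ? ? ?; apply: subD.
    move=> i _.
    case: (eqVneq (val i) 0) => [i0 | ni0].
      have -> : i = ord0 by apply: val_inj.
      apply: genB1; rewrite updnE /= ?eqxx; last by apply: (hg o1).
      apply: (@ideal_br A _ om) => //; rewrite updnE /= ?eqxx; apply: (hg ord0).
    case: (eqVneq (val i) 1) => [i1 | ni1].
      have -> : i = o1 by apply: val_inj.
      apply: genB1; rewrite updnE /= ?eqxx; first by apply: (hg ord0).
      apply: (@ideal_br N _ om) => //; rewrite updnE /= ?eqxx; apply: (hg o1).
    apply: genB1; rewrite updnE /= ?eqxx.
      by rewrite eq_sym (negbTE ni0); apply: (hg ord0).
    by rewrite eq_sym (negbTE ni1); apply: (hg o1).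
  + apply: (slot_span sB _ Hw) => _ [a [b [Aa Nb ->]]].
    rewrite leib; apply: subD => //.
      by apply: genB2 => //; apply: (@ideal_br N _ ord0) => //; rewrite updnE /= ?eqxx.
    by rewrite mulC; apply: genB2 => //; apply: (@ideal_br A _ ord0) => //; rewrite updnE /= ?eqxx.
Qed.

Definition Fst (I X : V -> Prop) :=
  sumS (brS br (fun j => if j == 0%N then X else I)) (prodS mul X I).

Lemma Fst_subspace I X : subspace (Fst I X).
Proof. by apply: sumS_subspace; apply: span_subspace. Qed.

Lemma Fst_mono I X Y : subS X Y -> subS (Fst I X) (Fst I Y).
Proof.
move=> h; apply: sumS_mono.
  by apply: brS_mono => k v; case: ifP => // _; apply: h.
by apply: prodS_mono => // v.
Qed.

Lemma FstJ_sub J X : ideal mul br J -> subS (Fst J X) J.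
Proof.
move=> hJ; apply: sumS_sub; first exact: ideal_sub.
  apply: brS_ind; first exact: ideal_sub.
  by move=> f hf; apply: (@ideal_br J _ o1) => //; apply: (hf o1).
by apply: prodS_ind; [exact: ideal_sub | move=> a b _ Jb; apply: ideal_mul].
Qed.

Lemma Fst_ideal K J Z : ideal mul br K -> subS Z K -> subS (Fst J Z) K.
Proof.
move=> hK hZ; apply: sumS_sub; first exact: ideal_sub.
  apply: brS_ind; first exact: ideal_sub.
  by move=> f hf; apply: (@ideal_br K _ o0) => //; apply: hZ; apply: (hf o0).
by apply: prodS_ind; [exact: ideal_sub | move=> a b Za _; apply: ideal_mulr => //; apply: hZ].
Qed.

Lemma stepQ N J K K' Z : ideal mul br N -> ideal mul br J -> subspace K' -> subS Z K ->
  (forall (f : {ffun 'I_n -> V}) (i : 'I_n), val i != 0%N -> K (f o0) -> N (f i) -> K' (br f)) ->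
  forall m (g : {ffun 'I_n -> V}), Z (g o0) ->
  (forall i : 'I_n, val i != 0%N -> (val i < m)%N -> sumS N J (g i)) ->
  (forall i : 'I_n, val i != 0%N -> (m <= val i)%N -> J (g i)) ->
  sumS (Fst J Z) K' (br g).
Proof.
move=> hN hJ sK' hZ Hbr; set W := sumS (Fst J Z) K'.
have sW : subspace W by apply: sumS_subspace => //; apply: Fst_subspace.
elim=> [|m IH] g g0 hlt hge.
  apply: sumS_l => //; apply: sumS_l; first exact: span_subspace.
  apply: brS_gen => k; case: ifP => [/eqP k0 | /negbT k0].
    by rewrite (_ : k = o0) //; apply: val_inj.
  by apply: hge.
case hm: ((m != 0%N) && (m < n)%N).
  case/andP: hm => m0 mn.
  pose i : 'I_n := Ordinal mn.
  have [a [b [Na Jb e]]] : sumS N J (g i) by apply: hlt => //=.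
  rewrite -(updn_id g i) e brD; apply: subD => //.
    apply: sumS_r; first exact: Fst_subspace.
    apply: (Hbr _ i) => //; rewrite updnE /=.
      by rewrite eq_sym (negbTE m0); apply: hZ.
    by rewrite eqxx.
  apply: IH.
  - by rewrite updnE /= eq_sym (negbTE m0).
  - move=> k k0 km; rewrite updnE /=; case: eqP => [ek|nk].
      by move: km; change (val k) with (nat_of_ord k); rewrite ek ltnn.
    by apply: hlt => //; apply: ltnW.
  - move=> k k0 mk; rewrite updnE /=; case: eqP => [//|nk].
    apply: hge => //; rewrite ltn_neqAle mk andbT eq_sym; apply/eqP => ek; exact: nk.
apply: IH => //.
  by move=> k k0 km; apply: hlt => //; apply: ltnW.
move=> k k0 mk; apply: hge => //; rewrite ltn_neqAle mk andbT.
apply/eqP => ek; move: hm; rewrite ek k0 /=.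
by rewrite (ltn_ord k).
Qed.

Lemma step N J K K' Z X : ideal mul br N -> ideal mul br J -> ideal mul br K' -> subS Z K ->
  (forall (f : {ffun 'I_n -> V}) (i : 'I_n), val i != 0%N -> K (f o0) -> N (f i) -> K' (br f)) ->
  (forall x a, K x -> N a -> K' (mul x a)) ->
  subS X (sumS Z K') -> subS (Fst (sumS N J) X) (sumS (Fst J Z) K').
Proof.
move=> hN hJ hK' hZ Hbr Hmul hX.
have sK' := ideal_sub hK'.
have sW : subspace (sumS (Fst J Z) K') by apply: sumS_subspace => //; apply: Fst_subspace.
apply: sumS_sub => //.
  apply: brS_ind => // f hf.
  have := hf o0; rewrite /= => /hX [z [y [Zz Ky e]]].
  rewrite -(updn_id f o0) e (brD f o0); apply: subD => //.
    apply: (stepQ hN hJ sK' hZ Hbr (m := n)).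
    - by rewrite updnE /=.
    - move=> k k0 _; rewrite updnE /= (negbTE k0).
      by have := hf k; rewrite (negbTE k0).
    - by move=> k _; rewrite leqNgt ltn_ord.
  apply: sumS_r; first exact: Fst_subspace.
  by apply: (@ideal_br K' _ o0) => //; rewrite updnE /=.
apply: prodS_ind => // x p /hX [z [y [Zz Ky ->]]] [a [b [Na Jb ->]]].
rewrite mulDl !mulDr; apply: subD => //; apply: subD => //.
- by apply: sumS_r; [exact: Fst_subspace | apply: Hmul => //; apply: hZ].
- apply: sumS_l => //; apply: sumS_r; first exact: span_subspace.
  exact: prodS_gen.
- by apply: sumS_r; [exact: Fst_subspace | apply: ideal_mulr].
- by apply: sumS_r; [exact: Fst_subspace | apply: ideal_mulr].
Qed.

Lemma iter_lem N J K K' m t : ideal mul br N -> ideal mul br J -> ideal mul br K' ->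
  (forall (f : {ffun 'I_n -> V}) (i : 'I_n), val i != 0%N -> K (f o0) -> N (f i) -> K' (br f)) ->
  (forall x a, K x -> N a -> K' (mul x a)) ->
  (forall Z, subS Z K -> subS (Fst J Z) K) ->
  is_zero (powD mul br J t) ->
  subS (powD mul br (sumS N J) m) K ->
  subS (powD mul br (sumS N J) (m + t.+1)) K'.
Proof.
move=> hN hJ hK' Hbr Hmul HG Ht hm.
have sK' := ideal_sub hK'.
have main : forall k, exists Z, [/\ subS Z K, subS Z (powD mul br J k) &
    subS (powD mul br (sumS N J) (m + k.+1)) (sumS Z K')].
  elim=> [|k [Z [ZK ZJ HZ]]].
    exists (Fst J (powD mul br (sumS N J) m)); split.
    - exact: HG.
    - exact: FstJ_sub.
    - rewrite addn1; apply: (step hN hJ hK' hm Hbr Hmul).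
      exact: sumS_l.
  exists (Fst J Z); split.
  - exact: HG.
  - exact: Fst_mono.
  - rewrite addnS; apply: (step hN hJ hK' ZK Hbr Hmul HZ).
case: (main t) => Z0 [_ ZJ HZ] v /HZ [z [y [Zz Ky ->]]].
have -> : z = 0 by apply: (proj1 (Ht z)); apply: ZJ.
by rewrite add0r.
Qed.

Lemma powD_subspace I k : subspace I -> subspace (powD mul br I k).
Proof. by case: k => [|k] //= _; apply: sumS_subspace; apply: span_subspace. Qed.

Lemma powI_subspace I k : subspace I -> subspace (powI mul br I k).
Proof. by case: k => [|k] //= _; apply: sumS_subspace; apply: span_subspace. Qed.

Lemma powI_mono I I' k : subS I I' -> subS (powI mul br I k) (powI mul br I' k).
Proof.
move=> h; elim: k => [|k IH] //=; apply: sumS_mono.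
  by apply: brS_mono => j v; case: ifP => // _; [apply: IH | case: ifP => // _; apply: h].
exact: prodS_mono.
Qed.

Lemma sum_ideal N J : ideal mul br N -> ideal mul br J -> ideal mul br (sumS N J).
Proof.
move=> hN hJ; have sN := ideal_sub hN; have sJ := ideal_sub hJ.
have sI : subspace (sumS N J) by apply: sumS_subspace.
split => //.
  apply: prodS_ind => // p _ _ [a [b [Na Jb ->]]].
  by rewrite mulDr; exists (mul p a), (mul p b); split => //; apply: ideal_mul.
apply: brS_ind => // f hf; have := hf o0; rewrite /= => -[a [b [Na Jb e]]].
rewrite -(updn_id f o0) e (brD f o0).
exists (br (updn f o0 a)), (br (updn f o0 b)); split => //.
  by apply: (@ideal_br N _ o0) => //; rewrite updnE /=.
by apply: (@ideal_br J _ o0) => //; rewrite updnE /=.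
Qed.

Lemma powI_gen N j (g : {ffun 'I_n -> V}) :
  powI mul br N j (g o0) -> N (g o1) -> powI mul br N j.+1 (br g).
Proof.
move=> h0 h1 /=; apply: sumS_l; first exact: span_subspace.
apply: brS_gen => k; case: ifP => [/eqP k0|_].
  by rewrite (_ : k = o0) //; apply: val_inj.
by case: ifP => // /eqP k1; rewrite (_ : k = o1) //; apply: val_inj.
Qed.

Lemma main_thm N J : is_Nil mul br N -> max_hypo_nilpotent mul br J -> subS N J.
Proof.
move=> [[hN [s Hs]] _] [[hJ [t Ht] nJ] maxJ].
have sN := ideal_sub hN; have sJ := ideal_sub hJ.
set I := sumS N J.
have hI : ideal mul br I by apply: sum_ideal.
have H1 : forall j, exists m, subS (powD mul br I m) (powI mul br N j).
  elim=> [|j [m Hm]].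
    exists (0 + t.+1); apply: (iter_lem (K := I)) => //.
    - by move=> f i _ _ Nfi; apply: (@ideal_br N _ i).
    - by move=> x a _ Na; apply: ideal_mul.
    - move=> Z _; apply: subS_trans; first exact: FstJ_sub.
      exact: sumS_r.
  exists (m + t.+1); apply: (iter_lem (K := powI mul br N j)) => //.
  - exact: powI_ideal.
  - move=> f i i0 h0 hi.
    case: (eqVneq i o1) => [ei | ni1]; first by rewrite ei in hi; apply: powI_gen.
    rewrite -[br f]opprK; apply: subN; first by apply: powI_subspace.
    rewrite -(skew' f ni1); apply: powI_gen; rewrite !updnE /=.
      by rewrite eq_sym (negbTE i0).
    by [].
  - move=> x a Kx Na /=; apply: sumS_r; first exact: span_subspace.
    exact: prodS_gen.
  - by move=> Z hZ; apply: Fst_ideal => //; apply: powI_ideal.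
case: (H1 s) => m Hm.
have nil : nilpotent_subalgebra mul br I.
  exists m => v; split; first by move/Hm/Hs.
  by move=> ->; apply: sub0; apply: powD_subspace; case: hI.
have hyp : hypo_nilpotent mul br I.
  split => // -[_ [s' Hs']]; apply: nJ; split => //; exists s' => v; split.
    by move=> Hv; apply/Hs'; apply: (powI_mono (I := J)) Hv; apply: sumS_r.
  by move=> ->; apply: sub0; apply: powI_subspace.
have HIJ := maxJ I hyp (sumS_r sN).
by move=> v Nv; apply: HIJ; apply: sumS_l.
Qed.

End Poisson.

Theorem proposition5p15 (F : fieldType) (V : lmodType F) (n : nat)
  (mul : V -> V -> V) (br : {ffun 'I_n -> V} -> V) :
  (2 <= n)%N ->
  poisson_nlie mul br ->
  forall N J : V -> Prop,
    is_Nil mul br N ->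
    max_hypo_nilpotent mul br J ->
    subS N J.
Proof.
case: n mul br => [|[|n']] // mul br _ HP N J.
exact: main_thm.
Qed.
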